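(* Consider $n$ processes running the Median-based Byzantine Agreement algorithm (described in the context) with any parameter $\alpha$ satisfying $0 \le \alpha < \lceil n/6 \rceil - 1$, in a system in which fewer than $\lfloor n/3 \rfloor$ processes are Byzantine. Then the algorithm satisfies interval validity: letting $T$ be the multiset of inputs of the non-faulty processes, every value $d$ output by a non-faulty process satisfies $d \in \{\min T, \dots, \max T\}$.
   Context: System model: $n$ processes $p_1,\dots,p_n$ communicate over a complete network in fully synchronous rounds (every message sent in a round is delivered before the next round); the receiver of a message knows its sender. A Byzantine (faulty) process may deviate arbitrarily from the protocol, e.g. send different messages to different processes or omit messages; the other processes are non-faulty. Each process $p_i$ has an input value $v_i$ from a totally ordered domain $V$ (integers); $\bot \notin V$ is a special default value. WeakMVBA: a Byzantine agreement protocol (tolerating the given number of Byzantine processes) in which each process has an input and all non-faulty processes terminate with: (consistency) the same decision value; (weak validity) if all non-faulty processes have the same input $v$, the decision is $v$; otherwise the decision is some value of $V\cup\{\bot\}$. Median-based Byzantine Agreement algorithm with parameter $\alpha$, run by a process with input $v$: (1) send $v$ to all processes (including itself); initialize an array $A[1..n]$ to $\bot$ and set $A[i]$ to the value received from $p_i$. (2) For each $i=1,\dots,n$, in parallel, run an instance of WeakMVBA in which this process uses input $A[i]$, and replace $A[i]$ by the decision of that instance. (3) Output select\_value$(A)$, defined as: delete all $\bot$ entries of $A$ to obtain a list $A_{\not\bot}$ of length $k$; let $C[u]$ be the number of occurrences of $u$ in $A_{\not\bot}$ and let $m$ be a value maximizing $C[m]$ (ties broken by a fixed deterministic rule); if $C[m]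 \ge \lfloor k/3\rfloor + 1 + \alpha$, output $m$; otherwise sort $A_{\not\bot}$ in nondecreasing order and output its median element (the entry at position $\lfloor k/2 \rfloor$; for even $k$ the lower of the two middle values). *)

(* Defs.v *)
From mathcomp Require Import all_boot all_order all_algebra.
Set Implicit Arguments. Unset Strict Implicit. Unset Printing Implicit Defensive.
Import Order.TTheory GRing.Theory Num.Theory.

(* Values: V = int; the default value bot is encoded as [None : option int]. *)

(* A deterministic tie-breaking rule for the mode: on a nonempty list it
   returns some value of maximal multiplicity (the theorem is stated for
   every such rule). *)
Definition mode_rule (tb : seq int -> int) : Prop :=
  forall s : seq int, s != [::] ->
    tb s \in s /\ forall u : int, (count_mem u s <= count_mem (tb s) s)%N.

(* select_value(A): delete bot entries (k of them remain), take the mode m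
   (ties broken by tb); output m if C[m] >= floor(k/3) + 1 + alpha, otherwise
   the median of the sorted list (lower middle value for even k, i.e. the
   0-based position (k-1)/2). *)
Definition select_value (tb : seq int -> int) (alpha : nat)
    (A : seq (option int)) : int :=
  let s := pmap id A in
  let k := size s in
  let m := tb s in
  if (k %/ 3 + 1 + alpha <= count_mem m s)%N then m
  else nth (0%R : int) (sort (fun x y : int => (x <= y)%R) s) ((k.-1) %/ 2).

Definition weakMVBA_spec (n : nat) (F : {set 'I_n})
    (inp out : 'I_n -> option int) : Prop :=
  (forall i i' : 'I_n, i \notin F -> i' \notin F -> out i = out i') /\
  (forall x : option int,
      (forall i : 'I_n, i \notin F -> inp i = x) ->
      forall i : 'I_n, i \notin F -> out i = x).

(* An execution of the Median-based BA algorithm: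
   - v i      : input of process i;
   - recv i j : value of A[j] at process i after step (1) (what i received
                from j, or bot); a non-faulty sender j sends v j to everyone,
                a faulty one may send anything or nothing;
   - dec i j  : decision of process i in the j-th WeakMVBA instance (step 2),
                whose input at process i is recv i j. *)
Definition MBA_execution (n : nat) (F : {set 'I_n}) (v : 'I_n -> int)
    (recv dec : 'I_n -> 'I_n -> option int) : Prop :=
  (forall i j : 'I_n, i \notin F -> j \notin F -> recv i j = Some (v j)) /\
  (forall j : 'I_n, weakMVBA_spec F (fun i => recv i j) (fun i => dec i j)).

Definition MBA_output (n : nat) (tb : seq int -> int) (alpha : nat)
    (dec : 'I_n -> 'I_n -> option int) (i : 'I_n) : int :=
  select_value tb alpha [seq dec i j | j <- enum 'I_n].

(* Main.v *)
Require Import Defs.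
From mathcomp Require Import all_boot all_order all_algebra zify.
Import Order.TTheory GRing.Theory Num.Theory.
Lemma L1 (t : seq int) p : sorted (fun x y : int => (x <= y)%R) t -> (p < size t)%N ->
  (p.+1 <= count (fun y => y <= nth 0 t p)%R t)%N.
Proof.
move=> St Hp. set P := (fun y => _).
have -> : count P t = (count P (take p.+1 t) + count P (drop p.+1 t))%N by rewrite -count_cat cat_take_drop.
have -> : count P (take p.+1 t) = p.+1.
  have Hs : size (take p.+1 t) = p.+1 by rewrite size_takel.
  rewrite -[in RHS]Hs; apply/eqP; rewrite -all_count; apply/(all_nthP (0%R : int)) => q; rewrite Hs => Hq.
  rewrite nth_take // /P; apply: (sorted_leq_nth (@le_trans _ int) (@lexx _ int) (0%R : int) St); rewrite ?inE /=; lia.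
exact: leq_addr.
Qed.
Lemma L2 (t : seq int) p : sorted (fun x y : int => (x <= y)%R) t -> (p < size t)%N ->
  (size t - p <= count (fun y => nth 0 t p <= y)%R t)%N.
Proof.
move=> St Hp. set P := (fun y => _).
have -> : count P t = (count P (take p t) + count P (drop p t))%N by rewrite -count_cat cat_take_drop.
have -> : count P (drop p t) = size t - p.
  have Hs : size (drop p t) = size t - p by rewrite size_drop.
  rewrite -[in RHS]Hs; apply/eqP; rewrite -all_count; apply/(all_nthP (0%R : int)) => q; rewrite Hs => Hq.
  rewrite nth_drop // /P; apply: (sorted_leq_nth (@le_trans _ int) (@lexx _ int) (0%R : int) St); rewrite ?inE /=; lia.
exact: leq_addl.
Qed.
Lemma cnt (T : finType) (P : pred T) : count P (enum T) = #|P|.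
Proof. rewrite cardE -size_filter /enum_mem -enumT /=. congr size. rewrite /enum_mem -!filter_predI. apply: eq_filter => x /=. by rewrite andbT. Qed.
Lemma cnt_pmap (T : eqType) (P : pred T) (A : seq (option T)) : count P (pmap id A) = count (fun o => if o is Some x then P x else false) A.
Proof. elim: A => [|[a|] A IH] //=; by rewrite IH. Qed.

Theorem lemma2 (n : nat) (alpha : nat) (tb : seq int -> int)
    (F : {set 'I_n}) (v : 'I_n -> int) (recv dec : 'I_n -> 'I_n -> option int) :
  mode_rule tb ->
  (alpha < (n + 5) %/ 6 - 1)%N ->
  (#|F| < n %/ 3)%N ->
  MBA_execution F v recv dec ->
  forall i : 'I_n, i \notin F ->
    (exists2 j : 'I_n, j \notin F & (v j <= MBA_output tb alpha dec i)%R) /\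
    (exists2 j : 'I_n, j \notin F & (MBA_output tb alpha dec i <= v j)%R).
Proof.
move=> _ _ Hf [Hrecv Hmv] i Hi.
have Hdec : forall j, j \notin F -> dec i j = Some (v j).
  move=> j Hj; case: (Hmv j) => _ Hw; apply: Hw => // i' Hi'; exact: Hrecv.
set e := enum 'I_n.
have He : size e = n by rewrite size_enum_ord.
have HF : count (mem F) e = #|F| by rewrite cnt.
pose cP (P : pred int) := fun j => if dec i j is Some x then P x else false.
have Hcnt : forall P : pred int, count P (pmap id [seq dec i j | j <- e]) = count (cP P) e.
  by move=> P; rewrite cnt_pmap count_map.
have Hbad : forall P : pred int, (forall j, j \notin F -> ~~ P (v j)) -> (count (cP P) e <= #|F|)%N.
  move=> P HP; rewrite -HF; apply: sub_count => j; rewrite /cP /=.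
  case: (boolP (j \in F)) => // Hj; move: (HP j Hj); rewrite Hdec //; by move/negbTE->.
rewrite /MBA_output /select_value -/e.
set s := pmap id _. set k := size s.
have Hk : k = count (cP predT) e by rewrite /k -count_predT Hcnt.
have HC : count (predC (mem F)) e = n - #|F|.
  have := count_predC (mem F) e; rewrite He HF; lia.
have Hk1 : (n - #|F| <= k)%N.
  rewrite Hk -HC; apply: sub_count => j /= Hj; by rewrite /cP Hdec.
case: ifP => Hm.
  set m := tb s in Hm *.
  case: (boolP [exists j, (j \notin F) && (v j == m)]).
    by case/existsP => j /andP[Hj /eqP <-]; split; exists j.
  move=> Hno.
  have Hno' : forall j, j \notin F -> ~~ (pred1 m) (v j).
    move=> j Hj /=; apply/negP => Hvj; move/negP: Hno; apply; apply/existsP; exists j; by rewrite Hj Hvj.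
  have Hc := Hbad _ Hno'.
  have Hc2 : (count (predC (mem F)) e + count (cP (pred1 m)) e <= k)%N.
    rewrite -count_predUI.
    have -> : count (predI (predC (mem F)) (cP (pred1 m))) e = 0.
      apply/eqP; rewrite -leqn0 -(count_pred0 e); apply: sub_count => j /= /andP[Hj].
      rewrite /cP Hdec // => H; by move: (Hno' j Hj); rewrite H.
    rewrite addn0 Hk; apply: sub_count => j /= /orP[Hj|]; first by rewrite /cP Hdec.
    by rewrite /cP; case: (dec i j).
  have : count_mem m s = count (cP (pred1 m)) e by rewrite Hcnt.
  move: Hm; rewrite -/k; lia.
set t := sort _ s.
have Hst : sorted (fun x y : int => (x <= y)%R) t.
  apply: sort_sorted => x y; exact: le_total.
have Hpt : perm_eq t s by rewrite perm_sort.
have Hsz : size t = k by rewrite (perm_size Hpt).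
have Hkp : (0 < k)%N by lia.
have Hp : ((k.-1) %/ 2 < size t)%N by rewrite Hsz; lia.
split.
  case: (boolP [exists j, (j \notin F) && (v j <= nth 0%R t (k.-1 %/ 2))%R]).
    by case/existsP => j /andP[Hj Hv]; exists j.
  move=> Hno; exfalso.
  have Hno' : forall j, j \notin F -> ~~ (fun y => y <= nth 0%R t (k.-1 %/ 2))%R (v j).
    move=> j Hj /=; apply/negP => Hvj; move/negP: Hno; apply; apply/existsP; exists j; by rewrite Hj Hvj.
  have Hc := Hbad (fun y => y <= nth 0%R t (k.-1 %/ 2))%R Hno'.
  have := @L1 t _ Hst Hp. rewrite ((permP Hpt) _) Hcnt. move=> HH; have := leq_trans HH Hc; lia.
case: (boolP [exists j, (j \notin F) && (nth 0%R t (k.-1 %/ 2) <= v j)%R]).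
  by case/existsP => j /andP[Hj Hv]; exists j.
move=> Hno; exfalso.
have Hno' : forall j, j \notin F -> ~~ (fun y => nth 0%R t (k.-1 %/ 2) <= y)%R (v j).
  move=> j Hj /=; apply/negP => Hvj; move/negP: Hno; apply; apply/existsP; exists j; by rewrite Hj Hvj.
have Hc := Hbad (fun y => nth 0%R t (k.-1 %/ 2) <= y)%R Hno'.
have := @L2 t _ Hst Hp. rewrite ((permP Hpt) _) Hcnt Hsz. move=> HH; have := leq_trans HH Hc; lia.
Qed.
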